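(* Let $K\ge 2$ and let $\mathbf{d}_1,\mathbf{d}_2\in\mathbb{R}^K$ be the vector-valued signed distance values at the two endpoints of a segment, both satisfying $\min^{(1)}(\mathbf{d})+\min^{(2)}(\mathbf{d})\ge 0$, and suppose the values along the segment are obtained by linear interpolation, $\mathbf{d}_\alpha=(1-\alpha)\mathbf{d}_1+\alpha\mathbf{d}_2$ for $\alpha\in[0,1]$ (as done by a linearly interpolating meshing algorithm), the surface of object $k$ being located where the $k$-th component vanishes. Then there are at most two object surfaces between the two endpoints, and these surfaces do not cross. Precisely: if neither $\mathbf{d}_1$ nor $\mathbf{d}_2$ has a zero entry, then there are at most two indices $k$ whose components have strictly opposite signs at the two endpoints; and if there are two such indices $i\neq j$, with $(\mathbf{d}_1)_i<0$ and $(\mathbf{d}_2)_j<0$, then the zero-crossing parameters $\alpha_i=\frac{-(\mathbf{d}_1)_i}{(\mathbf{d}_2)_i-(\mathbf{d}_1)_i}$ and $\alpha_j=\frac{-(\mathbf{d}_1)_j}{(\mathbf{d}_2)_j-(\mathbf{d}_1)_j}$ satisfy $\alpha_i\le\alpha_j$ (the surfaces are disjoint or at most touch). If an endpoint vector has a zero entry, then that vector has no negative entry, i.e. that endpoint lies on the surface of one or more objects and outside every other object.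
   Context: For a vector $\mathbf{d}\in\mathbb{R}^K$, $\min^{(n)}(\mathbf{d})$ denotes the $n$-th smallest entry of $\mathbf{d}$ (counted with multiplicity). The $k$-th component of a vector-valued signed distance field is the signed distance to object $k$ (negative inside, positive outside), so object $k$'s surface is its zero set. *)

(* Defs.v *)
From mathcomp Require Import all_boot all_order all_algebra.
Set Implicit Arguments. Unset Strict Implicit. Unset Printing Implicit Defensive.
Import Order.TTheory GRing.Theory Num.Theory.
Local Open Scope ring_scope.

(* min^(n)(d): the n-th smallest entry of d (n >= 1), counted with
   multiplicity: the (n-1)-th element (0-based) of the sorted list of entries. *)
Definition nth_min (R : realDomainType) (K : nat) (n : nat) (d : 'I_K -> R) : R :=
  nth 0 (sort <=%R [seq d k | k <- enum 'I_K]) n.-1.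

Definition interp (R : realDomainType) (K : nat) (d1 d2 : 'I_K -> R) (a : R) : 'I_K -> R :=
  fun k => (1 - a) * d1 k + a * d2 k.

Definition cross_param (R : realFieldType) (K : nat) (d1 d2 : 'I_K -> R) (k : 'I_K) : R :=
  - d1 k / (d2 k - d1 k).

Definition sign_change (R : realDomainType) (K : nat) (d1 d2 : 'I_K -> R) (k : 'I_K) : bool :=
  d1 k * d2 k < 0.

(* Main.v *)
Require Import Defs.
From mathcomp Require Import all_boot all_order all_algebra.
From mathcomp Require Import ring lra.
Import Order.TTheory GRing.Theory Num.Theory.
Local Open Scope ring_scope.

Lemma count2 (T : eqType) (P : pred T) (s : seq T) i j :
  uniq s -> i \in s -> j \in s -> i != j -> P i -> P j -> (1 < count P s)%N.
Proof.
move=> us Hi Hj ij Pi Pj.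
rewrite (permP (perm_to_rem Hi)) /= Pi.
have Hj' : j \in rem i s by rewrite mem_rem_uniq // inE eq_sym ij.
by rewrite (permP (perm_to_rem Hj')) /= Pj.
Qed.

Lemma sorted_nth0 (R : realDomainType) (s : seq R) (x : R) :
  sorted <=%R s -> (0 < count (fun y => (y <= x)%R) s)%N -> nth 0 s 0 <= x.
Proof.
case: s => [|a t] //= st.
have /allP al := order_path_min (@le_trans _ R) st.
case: (lerP a x) => // ax.
rewrite add0n -has_count => /hasP [y /al ay yx].
by move: (lt_le_trans ax ay); rewrite ltNge yx.
Qed.

Lemma sorted_nth1 (R : realDomainType) (s : seq R) (x : R) :
  sorted <=%R s -> (1 < count (fun y => (y <= x)%R) s)%N -> nth 0 s 1 <= x.
Proof.
case: s => [|a [|b t]] //=; first by case: (a <= x).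
move=> /andP [_ st].
have /allP al := order_path_min (@le_trans _ R) st.
case: (lerP b x) => // bx.
have -> : count (fun y => (y <= x)%R) t = 0%N.
  apply/eqP; rewrite -leqn0 leqNgt -has_count; apply/hasP => [[y /al ay yx]].
  by move: (lt_le_trans bx ay); rewrite ltNge yx.
by case: (a <= x).
Qed.

Lemma pair_ge (R : realDomainType) (K : nat) (d : 'I_K -> R) i j :
  i != j -> nth_min 1 d + nth_min 2 d <= d i + d j.
Proof.
wlog dij : i j / d i <= d j.
  move=> H ij; case: (lerP (d i) (d j)) => h.
    exact: (H i j h ij).
  by rewrite [d i + _]addrC; apply: (H j i (ltW h)); rewrite eq_sym.
move=> ij; rewrite /nth_min /=.
set s := sort _ _.
have ss : sorted <=%R s by apply: sort_sorted; exact: le_total.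
have ps : perm_eq s [seq d k | k <- enum 'I_K] by rewrite perm_sort.
apply: lerD.
  apply: sorted_nth0 => //; rewrite (permP ps) count_map.
  rewrite -has_count; apply/hasP; exists i; by rewrite ?mem_enum //= inE.
apply: sorted_nth1 => //; rewrite (permP ps) count_map.
apply: (@count2 _ _ _ i j); rewrite ?enum_uniq ?mem_enum //= inE //.
Qed.

Lemma neg_uniq (R : realDomainType) (K : nat) (d : 'I_K -> R) :
  0 <= nth_min 1 d + nth_min 2 d -> (#|[set k | (d k < 0)%R]| <= 1)%N.
Proof.
move=> H; apply/card_le1_eqP => i j; rewrite !inE => hi hj.
apply/eqP; apply/negPn/negP => ij.
have hh := le_trans H (@pair_ge _ _ d _ _ ij); by move: (ltrD hj hi); rewrite addr0 ltNge hh.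
Qed.

Theorem mainTheorem4 (R : realFieldType) (K : nat) (d1 d2 : 'I_K -> R) :
  (2 <= K)%N ->
  0 <= nth_min 1 d1 + nth_min 2 d1 ->
  0 <= nth_min 1 d2 + nth_min 2 d2 ->
  [/\ ((forall k, d1 k != 0) -> (forall k, d2 k != 0) ->
        (#|[set k | sign_change d1 d2 k]| <= 2)%N /\
        (forall i j : 'I_K, i != j ->
           sign_change d1 d2 i -> sign_change d1 d2 j ->
           d1 i < 0 -> d2 j < 0 ->
           cross_param d1 d2 i <= cross_param d1 d2 j)),
      ((exists k, d1 k = 0) -> forall k, 0 <= d1 k) &
      ((exists k, d2 k = 0) -> forall k, 0 <= d2 k)].
Proof.
move=> _ H1 H2.
have zer : forall d : 'I_K -> R, 0 <= nth_min 1 d + nth_min 2 d ->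
    (exists k, d k = 0) -> forall k, 0 <= d k.
  move=> d H [k dk] m; case: (lerP 0 (d m)) => // dm.
  have km : k != m by apply/eqP => e; move: dm; rewrite -e dk ltxx.
  have hh := le_trans H (@pair_ge _ _ d _ _ km); rewrite dk add0r in hh; by move: dm; rewrite ltNge hh.
split; [|exact: zer|exact: zer].
move=> nz1 nz2; split.
  apply: (@leq_trans (#|[set k | (d1 k < 0)%R]| + #|[set k | (d2 k < 0)%R]|)).
    apply: leq_trans (leq_card_setU _ _); apply: subset_leq_card.
    apply/subsetP => k; rewrite !inE /sign_change => h.
    case: (ltrP (d1 k) 0) => //= a; rewrite ltNge; apply/negP => b.
    by move: h; rewrite ltNge mulr_ge0.
  by rewrite -[2%N]/(1 + 1)%N leq_add // neg_uniq.
move=> i j ij si sj d1i d2j.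
move: si sj; rewrite /sign_change /cross_param (nmulr_rlt0 _ d1i) mulrC (nmulr_rlt0 _ d2j) => d2i d1j.
have ha := le_trans H1 (@pair_ge _ _ d1 _ _ ij).
have hb := le_trans H2 (@pair_ge _ _ d2 _ _ ij).
move: ha hb d1i d2i d1j d2j.
move: (d1 i) (d2 i) (d1 j) (d2 j) => a b c e ha hb d1i d2i d1j d2j.
rewrite -subr_ge0.
have nzA : b - a != 0 by apply: lt0r_neq0; lra.
have nzB : e - c != 0 by apply: ltr0_neq0; lra.
have -> : - c / (e - c) - - a / (b - a) = (c * b - a * e) / ((b - a) * (c - e)).
  by field; rewrite nzA nzB /= andbT; apply: lt0r_neq0; lra.
apply: divr_ge0; first nra.
nra.
Qed.
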